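(* For every PMCFG $G$, $L(G)\subseteq L(\mathcal{M}(G))$, where $\mathcal{M}(G)$ is the automaton with respect to $G$.
   Context: Composition functions. Fix variables $x_i^j$ ($i,j\in\mathbb{N}_+$). For $s_1,\dots,s_\ell,s\in\mathbb{N}_+$ a composition function of sort $(s_1\cdots s_\ell,s)$ over $\Sigma$ is given by a tuple $[u_1,\dots,u_s]$ with each $u_i$ a string over $\Sigma\cup\{x_i^j : i\in[\ell], j\in[s_i]\}$; it maps $((w_1^1,\dots,w_1^{s_1}),\dots,(w_\ell^1,\dots,w_\ell^{s_\ell}))$ to the $s$-tuple obtained from $(u_1,\dots,u_s)$ by replacing each $x_i^j$ by $w_i^j$ (variables may occur several times or not at all). PMCFG. $G=(N,\Sigma,I,R)$ with $N$ a finite set of nonterminals each with a sort in $\mathbb{N}_+$, $I$ a set of nonterminals of sort 1, $R$ a finite set of rules $A\to f(A_1,\dots,A_\ell)$ with $f$ of sort $(s_1\cdots s_\ell,s)$, $A$ of sort $s$, $A_i$ of sort $s_i$. Derivations from $A$: $r(d_1,\dots,d_\ell)$ with $r=A\to f(A_1,\dots,A_\ell)\in R$ and $d_i$ derivations from $A_i$; the generated tuple is $f$ applied to the tuples generated by the $d_i$. $L(G)$ = strings generated by derivations from some $S\in I$. Tree stacks and TSA. A tree stack over $\Gamma$ ($@\notin\Gamma$) is $(\xi,\rho)$ with $\xi:\mathbb{N}_+^*\rightharpoonup\Gamma\cup\{@\}$ of finite prefix-closed domain, $\xi(\varepsilon)=@$, labels elsewhere in $\Gamma$, and $\rho\in\mathrm{dom}(\xi)$.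 Predicates: $\mathrm{bottom}$ ($\rho=\varepsilon$), $\mathrm{equals}(\gamma)$ ($\xi(\rho)=\gamma$), and ''all''. Instructions: $\mathrm{id}$; $\mathrm{push}_n(\gamma)$ (defined iff $\rho n\notin\mathrm{dom}(\xi)$, result $(\xi[\rho n\mapsto\gamma],\rho n)$); $\mathrm{up}_n$ (defined iff $\rho n\in\mathrm{dom}(\xi)$, result $(\xi,\rho n)$); $\mathrm{down}$ ($(\xi,\rho n)\mapsto(\xi,\rho)$); $\mathrm{set}(\gamma)$ (defined iff $\rho\ne\varepsilon$, result $(\xi[\rho\mapsto\gamma],\rho)$). Initial tree stack $(\{\varepsilon\mapsto@\},\varepsilon)$. A TSA has finite states, initial state, final states and finitely many transitions $(q,\omega,p,f,q')$ ($\omega\in\Sigma\cup\{\varepsilon\}$); $(q,c,w)\vdash_\tau(q',c',w')$ iff $w=\omega w'$, $c\in p$, $f(c)=c'$ defined. A valid run goes from (initial state, initial tree stack, $w$) to (final state, some tree stack, $\varepsilon$); $L(\mathcal{M})$ is the set of such $w$. The automaton $\mathcal{M}(G)$ with respect to a PMCFG $G=(N,\Sigma,I,R)$. Let $\bar R=\{\langle r,i,j\rangle : r=A\to[u_1,\dots,u_s](A_1,\dots,A_\ell)\in R, i\in[s], j\in\{0,\dots,|u_i|\}\}$ and $\Box$ a fresh symbol. Stack alphabet $\Gamma=\{\Box\}\cup R\cup\bar R$; states $Q=\{q,q_+,q_- : q\in\bar R\cup\{\Box\}\}$ (with $q_+,q_-$ fresh copies); initial state $\Box$; final states $\{\Box\}$.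 The transition set is the smallest set containing: (i) for every $r=S\to[u](A_1,\dots,A_\ell)\in R$ with $S\in I$: $(\Box,\varepsilon,\text{all},\mathrm{push}_1(\Box),\langle r,1,0\rangle)$, $(\langle r,1,|u|\rangle,\varepsilon,\mathrm{equals}(\Box),\mathrm{set}(r),\Box_-)$, and $(\Box_-,\varepsilon,\text{all},\mathrm{down},\Box)$; (ii) for every $r=A\to[u_1,\dots,u_s](A_1,\dots,A_\ell)\in R$, $i\in[s]$, $j\in[|u_i|]$ such that the $j$-th symbol of $u_i$ is $\sigma\in\Sigma$: $(\langle r,i,j-1\rangle,\sigma,\text{all},\mathrm{id},\langle r,i,j\rangle)$; (iii) for every $r=A\to[u_1,\dots,u_s](A_1,\dots,A_\ell)\in R$, $i\in[s]$, $j\in[|u_i|]$, $\kappa\in[\ell]$, $r'=A_\kappa\to[v_1,\dots,v_{s'}](B_1,\dots,B_{\ell'})\in R$, $m\in[s']$ such that the $j$-th symbol of $u_i$ is $x_\kappa^m$, writing $q=\langle r,i,j\rangle$: $(\langle r,i,j-1\rangle,\varepsilon,\text{all},\mathrm{push}_\kappa(q),\langle r',m,0\rangle)$, $(\langle r,i,j-1\rangle,\varepsilon,\text{all},\mathrm{up}_\kappa,q_+)$, $(q_+,\varepsilon,\mathrm{equals}(r'),\mathrm{set}(q),\langle r',m,0\rangle)$, $(\langle r',m,|v_m|\rangle,\varepsilon,\mathrm{equals}(q),\mathrm{set}(r'),q_-)$, and $(q_-,\varepsilon,\text{all},\mathrm{down},q)$. *)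

(* Defs.v *)
From Stdlib Require Import List Arith PeanoNat.
Import ListNotations.
Set Implicit Arguments.

(* A symbol of a component u_i: a terminal sigma, or a variable x_i^j
   (both indices 1-based, as in the paper). *)
Inductive csym (Sigma : Type) : Type :=
| T (a : Sigma)
| V (i j : nat).
Arguments V {Sigma} i j.

Definition compfun (Sigma : Type) := list (list (csym Sigma)).

Definition subst_sym (Sigma : Type) (ts : list (list (list Sigma)))
  (x : csym Sigma) : list Sigma :=
  match x with
  | T a => [a]
  | V i j => nth (j - 1) (nth (i - 1) ts []) []
  end.

Definition apply_comp (Sigma : Type) (f : compfun Sigma)
  (ts : list (list (list Sigma))) : list (list Sigma) :=
  map (fun u => flat_map (subst_sym ts) u) f.

Record rule (N Sigma : Type) := mkRule {
  lhs : N;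
  fn  : compfun Sigma;
  rhs : list N }.

Record pmcfg (N Sigma : Type) := mkPMCFG {
  sort    : N -> nat;
  initial : N -> Prop;
  rules   : list (rule N Sigma) }.

Definition pmcfg_wf (N Sigma : Type) (G : pmcfg N Sigma) : Prop :=
  (exists l : list N, forall A, In A l) /\
  (exists l : list Sigma, forall a, In a l) /\
  (forall A, 1 <= sort G A) /\
  (forall S, initial G S -> sort G S = 1) /\
  (forall r, In r (rules G) ->
     length (fn r) = sort G (lhs r) /\
     forall u, In u (fn r) -> forall i j, In (V i j) u ->
       exists Ai, 1 <= i /\ nth_error (rhs r) (i - 1) = Some Ai /\
                  1 <= j <= sort G Ai).

Inductive generates (N Sigma : Type) (G : pmcfg N Sigma) :
    N -> list (list Sigma) -> Prop :=
| gen_rule : forall (r : rule N Sigma) (ts : list (list (list Sigma))),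
    In r (rules G) ->
    length ts = length (rhs r) ->
    (forall k Ak tk, nth_error (rhs r) k = Some Ak -> nth_error ts k = Some tk ->
        generates G Ak tk) ->
    generates G (lhs r) (apply_comp (fn r) ts).

Definition lang_pmcfg (N Sigma : Type) (G : pmcfg N Sigma) (w : list Sigma) : Prop :=
  exists S, initial G S /\ generates G S [w].

Inductive stlabel (Gamma : Type) : Type :=
| At
| Lab (g : Gamma).
Arguments At {Gamma}.

(* Addresses are lists of positive-integer child indices, rho n = rho ++ [n]. *)
Definition address := list nat.

Record treestack (Gamma : Type) := mkTS {
  xi  : address -> option (stlabel Gamma);
  rho : address }.

Definition ts_init (Gamma : Type) : treestack Gamma :=
  mkTS (fun a => match a with [] => Some At | _ => None end) [].

Definition upd (Gamma : Type) (f : address -> option (stlabel Gamma))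
  (p : address) (l : stlabel Gamma) : address -> option (stlabel Gamma) :=
  fun a => if list_eq_dec Nat.eq_dec a p then Some l else f a.

Inductive tpred (Gamma : Type) : Type :=
| PAll
| PBottom
| PEquals (g : Gamma).
Arguments PAll {Gamma}.
Arguments PBottom {Gamma}.

Definition pred_holds (Gamma : Type) (p : tpred Gamma) (c : treestack Gamma) : Prop :=
  match p with
  | PAll => True
  | PBottom => rho c = []
  | PEquals g => xi c (rho c) = Some (Lab g)
  end.

Inductive instr (Gamma : Type) : Type :=
| IId
| IPush (n : nat) (g : Gamma)
| IUp (n : nat)
| IDown
| ISet (g : Gamma).
Arguments IId {Gamma}.
Arguments IUp {Gamma} n.
Arguments IDown {Gamma}.

Definition instr_apply (Gamma : Type) (f : instr Gamma) (c : treestack Gamma)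
  : option (treestack Gamma) :=
  match f with
  | IId => Some c
  | IPush n g =>
      match xi c (rho c ++ [n]) with
      | None => Some (mkTS (upd (xi c) (rho c ++ [n]) (Lab g)) (rho c ++ [n]))
      | Some _ => None
      end
  | IUp n =>
      match xi c (rho c ++ [n]) with
      | Some _ => Some (mkTS (xi c) (rho c ++ [n]))
      | None => None
      end
  | IDown =>
      match rho c with
      | [] => None
      | _ => Some (mkTS (xi c) (removelast (rho c)))
      end
  | ISet g =>
      match rho c with
      | [] => None
      | _ => Some (mkTS (upd (xi c) (rho c) (Lab g)) (rho c))
      end
  end.

Record tsa (Sigma Gamma Q : Type) := mkTSA {
  t_init  : Q;
  t_final : Q -> Prop;
  t_trans : Q -> option Sigma -> tpred Gamma -> instr Gamma -> Q -> Prop }.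

Definition consume (Sigma : Type) (om : option Sigma) (w' : list Sigma) : list Sigma :=
  match om with None => w' | Some a => a :: w' end.

Definition config (Sigma Gamma Q : Type) := (Q * treestack Gamma * list Sigma)%type.

Inductive step (Sigma Gamma Q : Type) (M : tsa Sigma Gamma Q) :
    config Sigma Gamma Q -> config Sigma Gamma Q -> Prop :=
| step_intro : forall q om p f q' c c' w',
    t_trans M q om p f q' ->
    pred_holds p c ->
    instr_apply f c = Some c' ->
    step M (q, c, consume om w') (q', c', w').

Inductive steps (Sigma Gamma Q : Type) (M : tsa Sigma Gamma Q) :
    config Sigma Gamma Q -> config Sigma Gamma Q -> Prop :=
| steps_refl : forall x, steps M x x
| steps_cons : forall x y z, step M x y -> steps M y z -> steps M x z.

Definition lang_tsa (Sigma Gamma Q : Type) (M : tsa Sigma Gamma Q) (w : list Sigma) : Prop :=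
  exists qf c, t_final M qf /\ steps M (t_init M, ts_init Gamma, w) (qf, c, []).

Section MG.
Variables (N Sigma : Type) (G : pmcfg N Sigma).

Inductive mg_gamma : Type :=
| GBox
| GRule (r : rule N Sigma)
| GBar (r : rule N Sigma) (i j : nat).

Inductive mg_qbase : Type :=
| QBox
| QBar (r : rule N Sigma) (i j : nat).

Inductive mg_state : Type :=
| Qn (q : mg_qbase)
| Qp (q : mg_qbase)
| Qm (q : mg_qbase).

Definition comp_sym (r : rule N Sigma) (i j : nat) (x : csym Sigma) : Prop :=
  exists ui, 1 <= i /\ nth_error (fn r) (i - 1) = Some ui /\
             1 <= j /\ nth_error ui (j - 1) = Some x.

Definition var_target (r : rule N Sigma) (kappa : nat) (r' : rule N Sigma)
  (m lm : nat) : Prop :=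
  1 <= kappa /\ nth_error (rhs r) (kappa - 1) = Some (lhs r') /\
  In r' (rules G) /\
  exists vm, 1 <= m /\ nth_error (fn r') (m - 1) = Some vm /\ length vm = lm.

Inductive mg_trans : mg_state -> option Sigma -> tpred mg_gamma ->
                     instr mg_gamma -> mg_state -> Prop :=
| mt_start : forall r u, In r (rules G) -> initial G (lhs r) -> fn r = [u] ->
    mg_trans (Qn QBox) None PAll (IPush 1 GBox) (Qn (QBar r 1 0))
| mt_finish : forall r u, In r (rules G) -> initial G (lhs r) -> fn r = [u] ->
    mg_trans (Qn (QBar r 1 (length u))) None (PEquals GBox) (ISet (GRule r)) (Qm QBox)
| mt_final_down : forall r u, In r (rules G) -> initial G (lhs r) -> fn r = [u] ->
    mg_trans (Qm QBox) None PAll IDown (Qn QBox)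
| mt_term : forall r i j a, In r (rules G) -> comp_sym r i j (T a) ->
    mg_trans (Qn (QBar r i (j - 1))) (Some a) PAll IId (Qn (QBar r i j))
| mt_push : forall r i j kappa m r' lm, In r (rules G) ->
    comp_sym r i j (V kappa m) -> var_target r kappa r' m lm ->
    mg_trans (Qn (QBar r i (j - 1))) None PAll (IPush kappa (GBar r i j))
             (Qn (QBar r' m 0))
| mt_up : forall r i j kappa m r' lm, In r (rules G) ->
    comp_sym r i j (V kappa m) -> var_target r kappa r' m lm ->
    mg_trans (Qn (QBar r i (j - 1))) None PAll (IUp kappa) (Qp (QBar r i j))
| mt_resume : forall r i j kappa m r' lm, In r (rules G) ->
    comp_sym r i j (V kappa m) -> var_target r kappa r' m lm ->
    mg_trans (Qp (QBar r i j)) None (PEquals (GRule r')) (ISet (GBar r i j))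
             (Qn (QBar r' m 0))
| mt_return : forall r i j kappa m r' lm, In r (rules G) ->
    comp_sym r i j (V kappa m) -> var_target r kappa r' m lm ->
    mg_trans (Qn (QBar r' m lm)) None (PEquals (GBar r i j)) (ISet (GRule r'))
             (Qm (QBar r i j))
| mt_ret_down : forall r i j kappa m r' lm, In r (rules G) ->
    comp_sym r i j (V kappa m) -> var_target r kappa r' m lm ->
    mg_trans (Qm (QBar r i j)) None PAll IDown (Qn (QBar r i j)).

Definition MG : tsa Sigma mg_gamma mg_state :=
  mkTSA (Qn QBox) (fun q => q = Qn QBox) mg_trans.

End MG.

(* Main.v *)
Require Import Defs.
From Stdlib Require Import List Lia Arith PeanoNat.
Import ListNotations.
Set Implicit Arguments.

Inductive dtree (N Sigma : Type) : Type :=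
| DNode (r : rule N Sigma) (ch : list (dtree N Sigma)).
Arguments DNode {N Sigma}.

Definition droot N Sigma (d : dtree N Sigma) := match d with DNode r _ => r end.
Definition dch N Sigma (d : dtree N Sigma) := match d with DNode _ ch => ch end.

Fixpoint yield N Sigma (d : dtree N Sigma) : list (list Sigma) :=
  match d with DNode r ch => apply_comp (fn r) (map (@yield N Sigma) ch) end.

Fixpoint dtree_ind' N Sigma (P : dtree N Sigma -> Prop)
  (H : forall r ch, (forall c, In c ch -> P c) -> P (DNode r ch)) d : P d :=
  match d with
  | DNode r ch => H r ch
      ((fix go (l : list (dtree N Sigma)) : forall c, In c l -> P c :=
         match l with
         | [] => fun c Hc => False_ind _ Hc
         | c' :: l' => fun c Hin =>
             match Hin with
             | or_introl e => eq_ind c' P (dtree_ind' P H c') c e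
             | or_intror Hin' => go l' c Hin'
             end
         end) ch)
  end.

Inductive valid N Sigma (G : pmcfg N Sigma) : dtree N Sigma -> Prop :=
| valid_i : forall r ch, In r (rules G) -> length ch = length (rhs r) ->
    (forall k c, nth_error ch k = Some c ->
       nth_error (rhs r) k = Some (lhs (droot c)) /\ valid G c) ->
    valid G (DNode r ch).

Lemma build N Sigma (G : pmcfg N Sigma) : forall (l : list N) (ts : list (list (list Sigma))),
  length ts = length l ->
  (forall k a t, nth_error l k = Some a -> nth_error ts k = Some t ->
     exists d, valid G d /\ lhs (droot d) = a /\ yield d = t) ->
  exists ds, map (@yield N Sigma) ds = ts /\ length ds = length l /\
    forall k c, nth_error ds k = Some c -> nth_error l k = Some (lhs (droot c)) /\ valid G c.
Proof.
  induction l as [|a l IH]; intros ts Hl H.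
  - destruct ts; simpl in Hl; try discriminate. exists []; simpl; split; [|split]; auto.
    intros [|k] c0 Hc; discriminate.
  - destruct ts as [|t ts]; simpl in Hl; try discriminate.
    destruct (H 0 a t eq_refl eq_refl) as [d [Hv [Ha Hy]]].
    destruct (IH ts (eq_add_S _ _ Hl) (fun k => H (S k))) as [ds [H1 [H2 H3]]].
    exists (d :: ds); simpl; rewrite H1, Hy, H2; split; [|split]; auto.
    intros [|k] c0 Hc; simpl in Hc.
    + inversion Hc; subst; simpl; auto.
    + apply H3; auto.
Qed.

Lemma gen_dtree N Sigma (G : pmcfg N Sigma) A t : generates G A t ->
  exists d, valid G d /\ lhs (droot d) = A /\ yield d = t.
Proof.
  induction 1 as [r ts Hin Hlen Hch IH].
  destruct (@build N Sigma G (rhs r) ts Hlen IH) as [ds [H1 [H2 H3]]].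
  exists (DNode r ds); simpl; rewrite H1; split; [|split]; auto.
  constructor; auto.
Qed.

Definition xit N Sigma := address -> option (stlabel (mg_gamma N Sigma)).

Inductive enc N Sigma (x : xit N Sigma) : address -> dtree N Sigma -> Prop :=
| enc_i : forall p r ch, x p = Some (Lab (GRule r)) ->
    (forall k c, nth_error ch k = Some c -> x (p ++ [S k]) <> None -> enc x (p ++ [S k]) c) ->
    enc x p (DNode r ch).

Definition encb N Sigma (x : xit N Sigma) p (d : dtree N Sigma) :=
  forall k c, nth_error (dch d) k = Some c -> x (p ++ [S k]) <> None -> enc x (p ++ [S k]) c.

Definition closed N Sigma (x : xit N Sigma) :=
  forall a n, x (a ++ [n]) <> None -> x a <> None.

Definition frame N Sigma (p : address) (x x' : xit N Sigma) :=
  forall a, (forall n y, a <> p ++ n :: y) -> x' a = x a.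

Lemma enc_ext N Sigma (x x' : xit N Sigma) p d : enc x p d ->
  (forall y, x' (p ++ y) = x (p ++ y)) -> enc x' p d.
Proof.
  intros H; revert x'; induction H as [p r ch Hp Hc IH]; intros x' E.
  constructor.
  - rewrite <- (app_nil_r p), E, app_nil_r; auto.
  - intros k c Hk Hn. apply IH; auto.
    + rewrite <- E; auto.
    + intros y; rewrite <- app_assoc; apply E.
Qed.

Lemma encb_ext N Sigma (x x' : xit N Sigma) p d : encb x p d ->
  (forall n y, x' (p ++ n :: y) = x (p ++ n :: y)) -> encb x' p d.
Proof.
  intros H E k c Hk Hn. apply enc_ext with x.
  - apply H; auto. rewrite <- E; auto.
  - intros y; rewrite <- app_assoc; apply E.
Qed.

Lemma upd_same G (f : address -> option (stlabel G)) p l : upd f p l p = Some l.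
Proof. unfold upd; destruct (list_eq_dec Nat.eq_dec p p); congruence. Qed.

Lemma upd_other G (f : address -> option (stlabel G)) p l a : a <> p -> upd f p l a = f a.
Proof. unfold upd; destruct (list_eq_dec Nat.eq_dec a p); congruence. Qed.

Lemma upd_none G (f : address -> option (stlabel G)) p l a : upd f p l a <> None -> a <> p -> f a <> None.
Proof. intros H1 H2; rewrite upd_other in H1; auto. Qed.

Lemma closed_upd N Sigma (x : xit N Sigma) p l : closed x ->
  (forall a n, a ++ [n] = p -> x a <> None) -> closed (upd x p l).
Proof.
  intros Hc Hp a n H.
  destruct (list_eq_dec Nat.eq_dec (a ++ [n]) p) as [E|E].
  - destruct (list_eq_dec Nat.eq_dec a p) as [E2|E2].
    + rewrite E2, upd_same; discriminate.
    + rewrite upd_other; eauto.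
  - rewrite upd_other in H; auto.
    destruct (list_eq_dec Nat.eq_dec a p) as [E2|E2].
    + rewrite E2, upd_same; discriminate.
    + rewrite upd_other; auto. eapply Hc; eauto.
Qed.

Lemma app_cons_neq (p : address) n y : p <> p ++ n :: y.
Proof. intros H. apply (f_equal (@length nat)) in H. rewrite length_app in H; simpl in H; lia. Qed.

Lemma app_one_neq (p : address) n : p ++ [n] <> [].
Proof. destruct p; simpl; discriminate. Qed.

Lemma iset_ok Gm (x : address -> option (stlabel Gm)) p g : p <> [] ->
  instr_apply (ISet g) (mkTS x p) = Some (mkTS (upd x p (Lab g)) p).
Proof. intros H; simpl; destruct p; [congruence|reflexivity]. Qed.

Lemma idown_ok Gm (x : address -> option (stlabel Gm)) p n :
  instr_apply IDown (mkTS x (p ++ [n])) = Some (mkTS x p).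
Proof.
  simpl. destruct (p ++ [n]) eqn:E.
  - exfalso; apply (app_one_neq p n); auto.
  - rewrite <- E, removelast_last; reflexivity.
Qed.

Lemma st_sil S Gm Q (M : tsa S Gm Q) q p f q' c c' w :
  t_trans M q None p f q' -> pred_holds p c -> instr_apply f c = Some c' ->
  step M (q, c, w) (q', c', w).
Proof. intros; exact (step_intro M q None p f q' c w H H0 H1). Qed.

Lemma st_term S Gm Q (M : tsa S Gm Q) q a p f q' c c' w :
  t_trans M q (Some a) p f q' -> pred_holds p c -> instr_apply f c = Some c' ->
  step M (q, c, a :: w) (q', c', w).
Proof. intros; exact (step_intro M q (Some a) p f q' c w H H0 H1). Qed.

Lemma steps_trans S Gm Q (M : tsa S Gm Q) x y z : steps M x y -> steps M y z -> steps M x z.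
Proof. induction 1; intros; auto. econstructor; eauto. Qed.

Lemma skipn_nth A (u : list A) : forall j x s, skipn j u = x :: s ->
  nth_error u j = Some x /\ skipn (S j) u = s.
Proof.
  induction u as [|a u IH]; intros [|j] x s H; simpl in *; try discriminate.
  - inversion H; subst; auto.
  - apply IH; auto.
Qed.

Definition runP N Sigma (G : pmcfg N Sigma) (d : dtree N Sigma) : Prop :=
  valid G d -> forall i u, 1 <= i -> nth_error (fn (droot d)) (i-1) = Some u ->
  forall s j, j + length s = length u -> skipn j u = s ->
  forall (x : xit N Sigma) rho w', rho <> [] -> x rho <> None -> closed x -> encb x rho d ->
  exists x', steps (MG G)
     (Qn (QBar (droot d) i j), mkTS x rho, flat_map (subst_sym (map (@yield N Sigma) (dch d))) s ++ w')
     (Qn (QBar (droot d) i (length u)), mkTS x' rho, w')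
   /\ closed x' /\ encb x' rho d /\ frame rho x x'.

Lemma run N Sigma (G : pmcfg N Sigma) : pmcfg_wf G -> forall d, runP G d.
Proof.
  intros Hwf d; induction d as [r ch IH] using dtree_ind'.
  destruct Hwf as [_ [_ [_ [_ Hwr]]]].
  intros Hv i u Hi Hu s; simpl in Hu |- *.
  pose proof Hv as Hv'; inversion Hv' as [r0 ch0 Hin Hlen Hch]; subst r0 ch0.
  induction s as [|sy s IHs]; intros j Hj Hsk x rho w' Hrho Hx Hcl Henc.
  - simpl in Hj. rewrite <- Hj, Nat.add_0_r. exists x. split; [constructor|].
    split; auto; split; auto. intros a _; reflexivity.
  - destruct (skipn_nth _ _ Hsk) as [Hnth Hsk'].
    simpl in Hj.
    destruct sy as [a | kap m].
    + destruct (IHs (S j) ltac:(lia) Hsk' x rho w' Hrho Hx Hcl Henc) as [x' [Hst R]].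
      exists x'; split; auto.
      simpl. eapply steps_cons; [|exact Hst].
      apply st_term with (p:=PAll) (f:=IId); [|exact I|reflexivity].
      assert (Hcs : comp_sym r i (S j) (T a)).
      { exists u; repeat split; auto; try lia. replace (S j - 1) with j by lia; auto. }
      pose proof (@mt_term N Sigma G r i (S j) a Hin Hcs) as Ht.
      replace (S j - 1) with j in Ht by lia. apply Ht.
    + destruct (proj2 (Hwr r Hin) u (nth_error_In _ _ Hu) kap m (nth_error_In _ _ Hnth))
        as [Ai [Hk1 [HAi Hm]]].
      assert (Hlt : kap - 1 < length ch).
      { rewrite Hlen. apply nth_error_Some. rewrite HAi; discriminate. }
      destruct (nth_error ch (kap-1)) as [c|] eqn:Ec;
        [|apply nth_error_None in Ec; lia].
      destruct (Hch _ _ Ec) as [HAc Hvc].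
      destruct c as [r' chc]. simpl in HAc.
      rewrite HAc in HAi; inversion HAi; subst Ai.
      pose proof Hvc as Hvc'; inversion Hvc' as [r1 ch1 Hin' Hlen' Hch']; subst r1 ch1.
      destruct (Hwr r' Hin') as [Hlr' _].
      destruct (nth_error (fn r') (m-1)) as [vm|] eqn:Hvm;
        [|apply nth_error_None in Hvm; lia].
      assert (Hvt : var_target G r kap r' m (length vm)).
      { repeat split; auto; try lia. exists vm; repeat split; auto; lia. }
      assert (Hcs : comp_sym r i (S j) (V kap m)).
      { exists u; repeat split; auto; try lia. replace (S j - 1) with j by lia; auto. }
      assert (Hsub : subst_sym (map (@yield N Sigma) ch) (V kap m)
                     = flat_map (subst_sym (map (@yield N Sigma) chc)) vm).
      { simpl. rewrite (nth_error_nth _ _ [] (map_nth_error (@yield N Sigma) _ _ Ec)).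
        simpl. unfold apply_comp.
        rewrite (nth_error_nth _ _ [] (map_nth_error (fun u => flat_map (subst_sym (map (@yield N Sigma) chc)) u) _ _ Hvm)).
        reflexivity. }
      set (L := flat_map (subst_sym (map (@yield N Sigma) ch)) s ++ w').
      assert (HL : flat_map (subst_sym (map (@yield N Sigma) ch)) (V kap m :: s) ++ w'
                   = flat_map (subst_sym (map (@yield N Sigma) chc)) vm ++ L).
      { unfold L. rewrite <- Hsub, app_assoc. reflexivity. }
      rewrite HL.
      set (L0 := flat_map (subst_sym (map (@yield N Sigma) chc)) vm ++ L).
      set (x1 := upd x (rho ++ [kap]) (Lab (GBar r i (S j)))).
      assert (Hph1 : steps (MG G) (Qn (QBar r i j), mkTS x rho, L0)
                        (Qn (QBar r' m 0), mkTS x1 (rho ++ [kap]), L0)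
                     /\ encb x1 (rho ++ [kap]) (DNode r' chc)).
      { destruct (x (rho ++ [kap])) as [lab|] eqn:Ex.
        - pose proof (Henc (kap-1) _ Ec) as He. replace (S (kap-1)) with kap in He by lia.
          rewrite Ex in He. specialize (He ltac:(discriminate)).
          inversion He as [p0 r0 ch0 Hxr Hchc]; subst p0 r0 ch0.
          split.
          + eapply steps_cons.
            { apply st_sil with (p:=PAll) (f:=IUp kap) (c':=mkTS x (rho ++ [kap])).
              - pose proof (@mt_up N Sigma G r i (S j) kap m r' (length vm) Hin Hcs Hvt) as Ht.
                replace (S j - 1) with j in Ht by lia. apply Ht.
              - exact I.
              - simpl. rewrite Ex. reflexivity. }
            eapply steps_cons.
            { apply st_sil with (p:=PEquals (GRule r')) (f:=ISet (GBar r i (S j))).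
              - exact (@mt_resume N Sigma G r i (S j) kap m r' (length vm) Hin Hcs Hvt).
              - simpl. exact Hxr.
              - apply iset_ok, app_one_neq. }
            constructor.
          + apply encb_ext with x.
            * intros k c Hk Hn. apply Hchc; auto.
            * intros n y. unfold x1. rewrite upd_other; auto.
              intros E; symmetry in E; apply (app_cons_neq _ _ E).
        - split.
          + eapply steps_cons.
            { apply st_sil with (p:=PAll) (f:=IPush kap (GBar r i (S j))).
              - pose proof (@mt_push N Sigma G r i (S j) kap m r' (length vm) Hin Hcs Hvt) as Ht.
                replace (S j - 1) with j in Ht by lia. apply Ht.
              - exact I.
              - simpl. rewrite Ex. reflexivity. }
            constructor.
          + intros k c Hk Hn. exfalso.
            unfold x1 in Hn. rewrite upd_other in Hn.
            * apply (Hcl _ _ Hn). exact Ex.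
            * intros E; symmetry in E; apply (app_cons_neq _ _ E). }
      destruct Hph1 as [Hst1 Henc1].
      assert (Hcl1 : closed x1).
      { apply closed_upd; auto. intros a n E. apply app_inj_tail in E. destruct E; subst; auto. }
      assert (Hx1 : x1 (rho ++ [kap]) = Some (Lab (GBar r i (S j)))) by apply upd_same.
      destruct (IH (DNode r' chc) (nth_error_In _ _ Ec) Hvc m vm ltac:(lia) Hvm vm 0
                  ltac:(lia) eq_refl x1 (rho ++ [kap]) L (app_one_neq _ _)
                  ltac:(rewrite Hx1; discriminate) Hcl1 Henc1)
        as [x2 [Hst2 [Hcl2 [Henc2 Hfr2]]]].
      simpl in Hst2.
      assert (Hag2 : forall a, (forall y, a <> rho ++ kap :: y) -> x2 a = x a).
      { intros a Ha. assert (Hf : forall n y, a <> (rho ++ [kap]) ++ n :: y).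
        { intros n y E. apply (Ha (n :: y)). rewrite E, <- app_assoc; reflexivity. }
        rewrite (Hfr2 a Hf).
        unfold x1; rewrite upd_other; [reflexivity|apply (Ha [])]. }
      set (x3 := upd x2 (rho ++ [kap]) (Lab (GRule r'))).
      assert (Hag3 : forall a, (forall y, a <> rho ++ kap :: y) -> x3 a = x a).
      { intros a Ha. unfold x3; rewrite upd_other; [apply Hag2; auto|apply (Ha [])]. }
      assert (Hnotrho : forall y, rho <> rho ++ kap :: y) by (intros; apply app_cons_neq).
      assert (Hx3 : x3 rho <> None) by (rewrite Hag3; auto).
      assert (Hcl3 : closed x3).
      { apply closed_upd; auto. intros a n E. apply app_inj_tail in E. destruct E; subst.
        rewrite Hag2; auto. }
      assert (Henc3 : encb x3 rho (DNode r ch)).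
      { intros k c Hk Hn. simpl in Hk.
        destruct (Nat.eq_dec (S k) kap) as [E|E].
        - subst kap. rewrite Nat.sub_succ, Nat.sub_0_r in Ec. rewrite Ec in Hk.
          inversion Hk; subst c. constructor.
          + apply upd_same.
          + intros k' c' Hk' Hn'. apply enc_ext with x2.
            * apply Henc2; auto. unfold x3 in Hn'; rewrite upd_other in Hn'; auto.
              intros E; symmetry in E; apply (app_cons_neq _ _ E).
            * intros y. unfold x3; rewrite upd_other; auto.
              rewrite <- app_assoc. intros E; symmetry in E; apply (app_cons_neq _ _ E).
        - assert (Hne : forall y y', (rho ++ [S k]) ++ y <> rho ++ kap :: y').
          { intros y y' E2. rewrite <- app_assoc in E2. apply app_inv_head in E2.
            simpl in E2. inversion E2; auto. }
          apply enc_ext with x.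
          + apply Henc; auto. simpl in Hk. auto. rewrite <- Hag3; auto.
            intros y; specialize (Hne [] y); rewrite app_nil_r in Hne; auto.
          + intros y. rewrite Hag3; auto. }
      destruct (IHs (S j) ltac:(lia) Hsk' x3 rho w' Hrho Hx3 Hcl3 Henc3)
        as [x4 [Hst4 [Hcl4 [Henc4 Hfr4]]]].
      exists x4; split; [|split; [auto|split; [auto|]]].
      * eapply steps_trans; [exact Hst1|].
        eapply steps_trans; [exact Hst2|].
        eapply steps_cons.
        { apply st_sil with (p:=PEquals (GBar r i (S j))) (f:=ISet (GRule r')).
          - exact (@mt_return N Sigma G r i (S j) kap m r' (length vm) Hin Hcs Hvt).
          - simpl. rewrite Hfr2; [exact Hx1|].
            intros n y E; apply (app_cons_neq _ _ E).
          - apply iset_ok, app_one_neq. }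
        eapply steps_cons.
        { apply st_sil with (p:=PAll) (f:=IDown).
          - exact (@mt_ret_down N Sigma G r i (S j) kap m r' (length vm) Hin Hcs Hvt).
          - exact I.
          - apply idown_ok. }
        exact Hst4.
      * intros a Ha. rewrite (Hfr4 a Ha). apply Hag3. intros y; apply Ha.
Qed.

Theorem mainTheorem5 (N Sigma : Type) (G : pmcfg N Sigma) :
  pmcfg_wf G ->
  forall w : list Sigma, lang_pmcfg G w -> lang_tsa (MG G) w.
Proof.
  intros Hwf w [S0 [HS Hg]].
  destruct (gen_dtree Hg) as [d [Hv [Hl Hy]]].
  destruct d as [r ch]. simpl in Hl, Hy.
  pose proof Hv as Hv'; inversion Hv' as [r0 ch0 Hin Hlen Hch]; subst r0 ch0.
  unfold apply_comp in Hy.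
  destruct (fn r) as [|u [|u2 fr]] eqn:Efn; simpl in Hy; try discriminate.
  inversion Hy as [Hw]. clear Hy.
  subst S0.
  set (x0 := xi (ts_init (mg_gamma N Sigma))).
  set (x1 := upd x0 [1] (Lab (GBox N Sigma))).
  assert (Hcl1 : closed x1).
  { intros a n H. unfold x1 in *.
    destruct (list_eq_dec Nat.eq_dec (a ++ [n]) [1]) as [E|E].
    - destruct a as [|b a]; [|destruct a; simpl in E; discriminate].
      rewrite upd_other; [simpl; discriminate|discriminate].
    - rewrite upd_other in H; auto. exfalso; apply H.
      destruct a as [|b a]; reflexivity. }
  assert (Henc1 : encb x1 [1] (DNode r ch)).
  { intros k c Hk Hn. exfalso. apply Hn. unfold x1. rewrite upd_other; [reflexivity|discriminate]. }
  assert (Hu : nth_error (fn r) (1 - 1) = Some u) by (rewrite Efn; reflexivity).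
  destruct (@run N Sigma G Hwf (DNode r ch) Hv 1 u (le_n 1) Hu u 0 eq_refl eq_refl x1 [1] []
              ltac:(discriminate) ltac:(unfold x1; rewrite upd_same; discriminate) Hcl1 Henc1)
    as [x2 [Hst2 [_ [_ Hfr2]]]].
  simpl in Hst2.
  exists (Qn (QBox N Sigma)), (mkTS (upd x2 [1] (Lab (GRule r))) []).
  split; [reflexivity|].
  simpl t_init. rewrite ?app_nil_r in Hst2. 
  eapply steps_cons.
  { apply st_sil with (p:=PAll) (f:=IPush 1 (GBox N Sigma)) (c' := mkTS x1 [1]).
    - exact (@mt_start N Sigma G r u Hin HS Efn).
    - exact I.
    - reflexivity. }
  eapply steps_trans; [exact Hst2|].
  eapply steps_cons.
  { apply st_sil with (p:=PEquals (GBox N Sigma)) (f:=ISet (GRule r)).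
    - exact (@mt_finish N Sigma G r u Hin HS Efn).
    - simpl. rewrite Hfr2; [unfold x1; apply upd_same|].
      intros n y E; apply (app_cons_neq _ _ E).
    - apply iset_ok; discriminate. }
  eapply steps_cons.
  { apply st_sil with (p:=PAll) (f:=IDown).
    - exact (@mt_final_down N Sigma G r u Hin HS Efn).
    - exact I.
    - apply (idown_ok _ [] 1). }
  constructor.
Qed.
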